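(* Let $D$ be an integral domain which is a P$\star$MD for some semistar operation $\star$ on $D$. Then: (a) every overring $T$ of $D$ is a P$\dot\star^T$MD; (b) every overring of $D$ that is $t$-linked to $(D,\star)$ is a P$v$MD; in particular $D^{[\star]}$ is a P$v$MD and, if moreover $(D:_KD^\star)\ne(0)$, the complete integral closure $\widetilde D$ of $D$ is a P$v$MD.
   Context: Let $D$ be an integral domain with quotient field $K$. $\overline{\mathbf F}(D)$ denotes the set of all nonzero $D$-submodules of $K$ and $\mathbf f(D)$ the set of nonzero finitely generated $D$-submodules of $K$. A semistar operation on $D$ is a map $\star:\overline{\mathbf F}(D)\to\overline{\mathbf F}(D)$, $E\mapsto E^\star$, such that for all $0\ne x\in K$ and $E,F\in\overline{\mathbf F}(D)$: (1) $(xE)^\star=xE^\star$; (2) $E\subseteq F\Rightarrow E^\star\subseteq F^\star$; (3) $E\subseteq E^\star$ and $(E^\star)^\star=E^\star$. $\star_f$ is defined by $E^{\star_f}=\bigcup\{F^\star:F\in\mathbf f(D),F\subseteq E\}$. An overring of $D$ is a ring $T$ with $D\subseteq T\subseteq K$; semistar operations on $T$ are defined analogously. For an overring $T$, $\dot\star^T$ is the semistar operation on $T$ given by $E\mapsto E^\star$; $v_T$ is $E\mapsto(T:_K(T:_KE))$ and $t_T:=(v_T)_f$. $T$ is $(\star,\star')$-linked to $D$ if for every nonzero finitely generated ideal $F\subseteq D$ with $F^\star=D^\star$ one has $(FT)^{\star'}=T^{\star'}$; $T$ is $t$-linked to $(D,\star)$ if it is $(\star,t_T)$-linked to $D$. For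 a semistar operation $\ast$ on a domain $R$ (here $R=D$ or an overring), $R$ is a P$\ast$MD if every nonzero finitely generated $R$-submodule $F$ of $K$ satisfies $(F(R:_KF))^{\ast_f}=R^\ast$; a P$v$MD is a P$v_R$MD. $D^{[\star]}:=\bigcup\{(H^\star:_KH^\star):H\in\mathbf f(D)\}$. The complete integral closure of $D$ is $\widetilde D=\bigcup\{(E:_KE): E$ a nonzero fractional ideal of $D\}$. *)

(* Defs.v *)
(* K is an abstract field (the quotient field of D);
   subsets of K (subrings, D-submodules) are predicates K -> Prop. *)
From HB Require Import structures.
From mathcomp Require Import all_boot all_algebra.
Set Implicit Arguments. Unset Strict Implicit. Unset Printing Implicit Defensive.
Import GRing.Theory.
Local Open Scope ring_scope.

Section Defs.
Variable K : fieldType.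

Definition subsetK (A B : K -> Prop) : Prop := forall x, A x -> B x.

Definition is_subring (R : K -> Prop) : Prop :=
  R 1 /\ (forall x y, R x -> R y -> R (x - y)) /\
  (forall x y, R x -> R y -> R (x * y)).

Definition domain_with_qf (D : K -> Prop) : Prop :=
  is_subring D /\ forall z : K, exists a b, D a /\ D b /\ b != 0 /\ z = a / b.

Definition is_overring (D T : K -> Prop) : Prop := is_subring T /\ subsetK D T.

Definition nz_submod (R E : K -> Prop) : Prop :=
  E 0 /\ (forall x y, E x -> E y -> E (x + y)) /\
  (forall r x, R r -> E x -> E (r * x)) /\ (exists x, x != 0 /\ E x).

Fixpoint span (R : K -> Prop) (s : seq K) : K -> Prop :=
  match s with
  | [::] => fun x => x = 0
  | a :: s' => fun x => exists r y, R r /\ span R s' y /\ x = r * a + y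
  end.

Definition fg_submod (R E : K -> Prop) : Prop :=
  (exists s : seq K, E = span R s) /\ (exists x, x != 0 /\ E x).

Definition scaleK (x : K) (E : K -> Prop) : K -> Prop :=
  fun y => exists e, E e /\ y = x * e.

Definition semistar (R : K -> Prop) (st : (K -> Prop) -> (K -> Prop)) : Prop :=
  (forall E, nz_submod R E -> nz_submod R (st E)) /\
  (forall x E, x != 0 -> nz_submod R E -> st (scaleK x E) = scaleK x (st E)) /\
  (forall E F, nz_submod R E -> nz_submod R F -> subsetK E F ->
     subsetK (st E) (st F)) /\
  (forall E, nz_submod R E -> subsetK E (st E) /\ st (st E) = st E).

Definition star_f (R : K -> Prop) (st : (K -> Prop) -> (K -> Prop))
  (E : K -> Prop) : K -> Prop :=
  fun x => exists F, fg_submod R F /\ subsetK F E /\ st F x.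

Definition colon (A B : K -> Prop) : K -> Prop :=
  fun x => forall b, B b -> A (x * b).

Definition prodK (A B : K -> Prop) : K -> Prop :=
  fun x => exists s : seq (K * K),
    (forall p, p \in s -> A p.1 /\ B p.2) /\ x = \sum_(p <- s) p.1 * p.2.

Definition vop (T : K -> Prop) (E : K -> Prop) : K -> Prop :=
  colon T (colon T E).
Definition top (T : K -> Prop) : (K -> Prop) -> (K -> Prop) :=
  star_f T (vop T).

Definition PstarMD (R : K -> Prop) (ast : (K -> Prop) -> (K -> Prop)) : Prop :=
  forall F, fg_submod R F -> star_f R ast (prodK F (colon R F)) = ast R.

Definition PvMD (R : K -> Prop) : Prop := PstarMD R (vop R).

Definition linked (D T : K -> Prop) (st st' : (K -> Prop) -> (K -> Prop)) : Prop :=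
  forall F, fg_submod D F -> subsetK F D -> st F = st D ->
    st' (prodK F T) = st' T.

Definition t_linked (D : K -> Prop) (st : (K -> Prop) -> (K -> Prop))
  (T : K -> Prop) : Prop := linked D T st (top T).

Definition Dbrack (D : K -> Prop) (st : (K -> Prop) -> (K -> Prop)) : K -> Prop :=
  fun x => exists H, fg_submod D H /\ colon (st H) (st H) x.

Definition frac_ideal (D E : K -> Prop) : Prop :=
  nz_submod D E /\ exists d, d != 0 /\ D d /\ subsetK (scaleK d E) D.

Definition cic (D : K -> Prop) : K -> Prop :=
  fun x => exists E, frac_ideal D E /\ colon E E x.

End Defs.

(* Main.v *)
From mathcomp Require Import all_boot all_algebra.
Require Import Defs.
From Stdlib Require Import FunctionalExtensionality PropExtensionality.
Set Implicit Arguments. Unset Strict Implicit. Unset Printing Implicit Defensive.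
Import GRing.Theory.
Local Open Scope ring_scope.

Lemma pext (K : fieldType) (A B : K -> Prop) :
  subsetK A B -> subsetK B A -> A = B.
Proof.
move=> h1 h2; apply: functional_extensionality => x.
apply: propositional_extensionality; split; [exact: h1|exact: h2].
Qed.

Definition ismod (K : fieldType) (R E : K -> Prop) : Prop :=
  E 0 /\ (forall x y, E x -> E y -> E (x + y)) /\
  (forall r x, R r -> E x -> E (r * x)).

Lemma sr0 (K : fieldType) (R : K -> Prop) : is_subring R -> R 0.
Proof. by case=> h1 [hB _]; rewrite -(subrr 1); apply: hB. Qed.

Lemma srN (K : fieldType) (R : K -> Prop) x : is_subring R -> R x -> R (- x).
Proof. move=> hR hx; rewrite -sub0r; case: (hR) => _ [hB _]; apply: hB => //; exact: sr0. Qed.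

Lemma srD (K : fieldType) (R : K -> Prop) x y : is_subring R -> R x -> R y -> R (x + y).
Proof. move=> hR hx hy; rewrite -(opprK y); case: (hR) => _ [hB _]; apply: hB => //; exact: srN. Qed.

Lemma srM (K : fieldType) (R : K -> Prop) x y : is_subring R -> R x -> R y -> R (x * y).
Proof. by case=> _ [_ hM]; apply: hM. Qed.

Lemma sr1 (K : fieldType) (R : K -> Prop) : is_subring R -> R 1.
Proof. by case. Qed.

Lemma ring_mod (K : fieldType) (R T : K -> Prop) :
  is_subring T -> subsetK R T -> ismod R T.
Proof.
move=> hT hRT; split; first exact: sr0.
split=> *; [exact: srD|apply: srM => //; exact: hRT].
Qed.

Lemma nz_mod (K : fieldType) (R E : K -> Prop) : nz_submod R E -> ismod R E.
Proof. by case=> a [b [c _]]. Qed.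

Lemma mod_nz (K : fieldType) (R E : K -> Prop) x :
  ismod R E -> x != 0 -> E x -> nz_submod R E.
Proof. by case=> a [b c] hx hE; split=> //; split=> //; split=> //; exists x. Qed.

Lemma mod_sub (K : fieldType) (R R' E : K -> Prop) :
  subsetK R' R -> ismod R E -> ismod R' E.
Proof. by move=> h [a [b c]]; split=> //; split=> // r x hr; apply: c; apply: h. Qed.

Lemma modN (K : fieldType) (R E : K -> Prop) x :
  is_subring R -> ismod R E -> E x -> E (- x).
Proof.
move=> hR [_ [_ hM]] hx; rewrite -mulN1r; apply: hM => //; apply: srN => //; exact: sr1.
Qed.

Lemma span_mod (K : fieldType) (R : K -> Prop) s :
  is_subring R -> ismod R (span R s).
Proof.
move=> hR; elim: s => [|a s [h0 [hD hM]]] /=.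
  split=> //; split=> [x y -> ->|r x _ ->]; by rewrite ?addr0 ?mulr0.
split; first by exists 0, 0; split; [exact: sr0|split => //; rewrite mul0r addr0].
split.
  move=> x y [r [z [hr [hz ->]]]] [r' [z' [hr' [hz' ->]]]].
  exists (r + r'), (z + z'); split; first exact: srD.
  split; first exact: hD.
  by rewrite mulrDl -!addrA; congr (_ + _); rewrite addrCA.
move=> r x hr [r' [z [hr' [hz ->]]]].
exists (r * r'), (r * z); split; first exact: srM.
by split; [exact: hM|rewrite mulrDr mulrA].
Qed.

Lemma mem_span (K : fieldType) (R : K -> Prop) s a :
  is_subring R -> a \in s -> span R s a.
Proof.
move=> hR; elim: s => [|b s IH] //=; rewrite in_cons => /orP [/eqP ->|ha].
  exists 1, 0; split; first exact: sr1.
  split; first exact: (proj1 (@span_mod _ R s hR)).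
  by rewrite mul1r addr0.
exists 0, a; split; first exact: sr0.
by split; [exact: IH|rewrite mul0r add0r].
Qed.

Lemma span_sub (K : fieldType) (R E : K -> Prop) s :
  ismod R E -> (forall a, a \in s -> E a) -> subsetK (span R s) E.
Proof.
move=> [h0 [hD hM]]; elim: s => [|b s IH] hs x /=; first by move->.
move=> [r [y [hr [hy ->]]]]; apply: hD.
  apply: hM => //; apply: hs; exact: mem_head.
apply: IH => // a ha; apply: hs; rewrite in_cons ha orbT //.
Qed.

Lemma span_mono (K : fieldType) (R R' : K -> Prop) s :
  is_subring R' -> subsetK R R' -> subsetK (span R s) (span R' s).
Proof.
move=> hR' hRR'; apply: span_sub.
  apply: mod_sub hRR' _; exact: span_mod.
move=> a ha; exact: mem_span.
Qed.

Lemma span_nz (K : fieldType) (R : K -> Prop) s x :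
  span R s x -> x != 0 -> exists a, a \in s /\ a != 0.
Proof.
elim: s x => [|b s IH] x /=; first by move=> ->; rewrite eqxx.
move=> [r [y [_ [hy ->]]]] hx.
case: (eqVneq b 0) => [hb|hb]; last by exists b; rewrite mem_head.
have hy0 : y != 0 by move: hx; rewrite hb mulr0 add0r.
have [a [ha ha0]] := IH y hy hy0.
by exists a; rewrite in_cons ha orbT.
Qed.

Lemma prodK_ind (K : fieldType) (A B P : K -> Prop) :
  P 0 -> (forall x y, P x -> P y -> P (x + y)) ->
  (forall a b, A a -> B b -> P (a * b)) -> subsetK (prodK A B) P.
Proof.
move=> h0 hD hab x [s [hs ->]]; elim: s hs => [|p s IH] hs.
  by rewrite big_nil.
rewrite big_cons; apply: hD.
  by have [] := hs p (mem_head _ _); apply: hab.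
by apply: IH => q hq; apply: hs; rewrite in_cons hq orbT.
Qed.

Lemma prodK0 (K : fieldType) (A B : K -> Prop) : prodK A B 0.
Proof. by exists [::]; rewrite big_nil. Qed.

Lemma prodKD (K : fieldType) (A B : K -> Prop) x y :
  prodK A B x -> prodK A B y -> prodK A B (x + y).
Proof.
move=> [s [hs ->]] [t [ht ->]]; exists (s ++ t); rewrite big_cat; split=> // p.
by rewrite mem_cat => /orP [] ?; [apply: hs|apply: ht].
Qed.

Lemma prodK1 (K : fieldType) (A B : K -> Prop) a b :
  A a -> B b -> prodK A B (a * b).
Proof.
move=> ha hb; exists [:: (a, b)]; rewrite big_seq1; split=> // p.
by rewrite inE => /eqP ->.
Qed.

Lemma prodK_mod (K : fieldType) (R A B : K -> Prop) :
  (forall r b, R r -> B b -> B (r * b)) -> ismod R (prodK A B).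
Proof.
move=> hB; split; first exact: prodK0.
split; first exact: prodKD.
move=> r x hr hx.
have : (prodK A B x /\ forall r, R r -> prodK A B (r * x)).
  apply: (@prodK_ind _ A B (fun x => prodK A B x /\ forall r, R r -> prodK A B (r * x))) hx.
  - by split; [exact: prodK0|move=> *; rewrite mulr0; exact: prodK0].
  - move=> u v [hu hu'] [hv hv']; split; first exact: prodKD.
    by move=> r' hr'; rewrite mulrDr; apply: prodKD; [apply: hu'|apply: hv'].
  - move=> a b ha hb; split; first exact: prodK1.
    by move=> r' hr'; rewrite mulrCA; apply: prodK1 => //; apply: hB.
by case=> _; apply.
Qed.

Lemma prodK_mono (K : fieldType) (A B A' B' : K -> Prop) :
  subsetK A A' -> subsetK B B' -> subsetK (prodK A B) (prodK A' B').
Proof.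
move=> hA hB; apply: prodK_ind; [exact: prodK0|exact: prodKD|].
by move=> a b ha hb; apply: prodK1; [apply: hA|apply: hB].
Qed.

Lemma prodK_in_mod (K : fieldType) (R A B E : K -> Prop) :
  ismod R E -> (forall a b, A a -> B b -> E (a * b)) -> subsetK (prodK A B) E.
Proof. by move=> [h0 [hD _]]; apply: prodK_ind. Qed.

Section Semi.
End Semi.

Lemma D_nz (K : fieldType) (D : K -> Prop) : is_subring D -> nz_submod D D.
Proof. move=> hD; apply: (@mod_nz _ _ _ 1); [exact: ring_mod|exact: oner_neq0|exact: sr1]. Qed.

Lemma scale_nz (K : fieldType) (D E : K -> Prop) x :
  x != 0 -> nz_submod D E -> nz_submod D (scaleK x E).
Proof.
move=> hx [h0 [hD [hM [e [he0 he]]]]].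
split; first by exists 0; rewrite mulr0.
split; first by move=> u v [a [ha ->]] [b [hb ->]]; exists (a + b); rewrite mulrDr; split=> //; apply: hD.
split; first by move=> r u hr [a [ha ->]]; exists (r * a); rewrite mulrCA; split=> //; apply: hM.
by exists (x * e); split; [rewrite mulf_neq0|exists e].
Qed.

Lemma st_nz (K : fieldType) (D : K -> Prop) st E :
  semistar D st -> nz_submod D E -> nz_submod D (st E).
Proof. by case=> h _; apply: h. Qed.

Lemma st_ext (K : fieldType) (D : K -> Prop) st E :
  semistar D st -> nz_submod D E -> subsetK E (st E).
Proof. by case=> _ [_ [_ h]] hE; case: (h E hE). Qed.

Lemma st_idem (K : fieldType) (D : K -> Prop) st E :
  semistar D st -> nz_submod D E -> st (st E) = st E.
Proof. by case=> _ [_ [_ h]] hE; case: (h E hE). Qed.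

Lemma st_mono (K : fieldType) (D : K -> Prop) st E F :
  semistar D st -> nz_submod D E -> nz_submod D F -> subsetK E F ->
  subsetK (st E) (st F).
Proof. by case=> _ [_ [h _]]; apply: h. Qed.

Lemma st_scale_sub (K : fieldType) (D : K -> Prop) st E A b y :
  semistar D st -> nz_submod D E -> nz_submod D A -> b != 0 ->
  (forall e, E e -> A (b * e)) -> st E y -> st A (b * y).
Proof.
move=> hst hE hA hb hEA hy.
have hs : st (scaleK b E) (b * y).
  by case: hst => _ [h _]; rewrite h //; exists y.
apply: (st_mono hst _ hA _ hs); first exact: scale_nz.
by move=> x [e [he ->]]; apply: hEA.
Qed.

Lemma st_scale_sub0 (K : fieldType) (D : K -> Prop) st E A b y :
  semistar D st -> nz_submod D E -> nz_submod D A ->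
  (forall e, E e -> A (b * e)) -> st E y -> st A (b * y).
Proof.
move=> hst hE hA hEA hy; case: (eqVneq b 0) => [->|hb].
  by rewrite mul0r; case: (st_nz hst hA).
exact: (st_scale_sub hst hE hA hb hEA hy).
Qed.

Lemma colon_mod (K : fieldType) (T F : K -> Prop) :
  is_subring T -> ismod T (colon T F).
Proof.
move=> hT; split; first by move=> b _; rewrite mul0r; exact: sr0.
split; first by move=> x y hx hy b hb; rewrite mulrDl; apply: srD => //; [apply: hx|apply: hy].
by move=> r x hr hx b hb; rewrite -mulrA; apply: srM => //; apply: hx.
Qed.

Lemma colon_span (K : fieldType) (R T : K -> Prop) s x :
  is_subring T -> subsetK R T -> (forall a, a \in s -> T (x * a)) ->
  colon T (span R s) x.
Proof.
move=> hT hRT hs b; apply: span_sub hs b.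
split; first by rewrite mulr0; exact: sr0.
split; first by move=> u v hu hv; rewrite mulrDr; exact: srD.
by move=> r u hr hu; rewrite mulrCA; apply: srM => //; apply: hRT.
Qed.

Lemma prod_colon_sub (K : fieldType) (T F : K -> Prop) :
  is_subring T -> subsetK (prodK F (colon T F)) T.
Proof.
move=> hT; apply: prodK_ind; [exact: sr0|move=> *; exact: srD|].
by move=> a b ha hb; rewrite mulrC; apply: hb.
Qed.

Lemma fg_nz (K : fieldType) (R F : K -> Prop) :
  is_subring R -> fg_submod R F -> nz_submod R F.
Proof.
move=> hR [[s ->] [x [hx0 hx]]]; exact: (mod_nz (span_mod s hR) hx0 hx).
Qed.

Lemma core (K : fieldType) (D : K -> Prop) st T s x :
  domain_with_qf D -> semistar D st -> PstarMD D st -> is_overring D T ->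
  span T s x -> x != 0 ->
  exists h, fg_submod D (span D h) /\ subsetK (span D h) D /\
    subsetK (span T h) (prodK (span T s) (colon T (span T s))) /\
    st (span D h) 1.
Proof.
move=> [hD _] hst hP [hT hDT] hx hx0.
have [a [has ha0]] := span_nz hx hx0.
have hG : fg_submod D (span D s).
  by split; [exists s|exists a; split=> //; exact: mem_span].
have h1 : st D 1 by apply: (st_ext hst (D_nz hD)); exact: sr1.
rewrite -(hP _ hG) in h1.
case: h1 => H [[[h ->] hHnz] [hHsub hH1]].
exists h; split; first by split; [exists h|].
split; first by move=> y hy; apply: (prod_colon_sub (F := span D s) hD); apply: hHsub.
split=> //.
apply: span_sub.
  apply: prodK_mod => r b hr hb; exact: (proj2 (proj2 (colon_mod (span T s) hT))).
move=> c hc.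
apply: (prodK_mono (A := span D s) (B := colon D (span D s))).
- exact: span_mono.
- move=> y hy; apply: colon_span => // a' ha'.
  by apply: hDT; apply: hy; exact: mem_span.
- by apply: hHsub; exact: mem_span.
Qed.

Lemma nz_sub (K : fieldType) (R R' E : K -> Prop) :
  subsetK R' R -> nz_submod R E -> nz_submod R' E.
Proof. by move=> h [a [b [c d]]]; split=> //; split=> //; split=> // r x hr; apply: c; apply: h. Qed.

Lemma over_nz (K : fieldType) (D T : K -> Prop) : is_overring D T -> nz_submod D T.
Proof. move=> [hT hDT]; apply: (@mod_nz _ _ _ 1); [exact: ring_mod|exact: oner_neq0|exact: sr1]. Qed.

Lemma st_T_sub (K : fieldType) (D : K -> Prop) st T h :
  is_subring D -> semistar D st -> is_overring D T -> fg_submod T (span T h) ->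
  st (span T h) 1 -> subsetK (st T) (st (span T h)).
Proof.
move=> hD hst hT' hfg h1.
have [hT hDT] := hT'.
have hnz : nz_submod D (span T h) by apply: (nz_sub hDT); exact: fg_nz.
have hTs : subsetK T (st (span T h)).
  move=> t ht; rewrite -(mulr1 t); apply: (st_scale_sub0 hst hnz hnz) => // e he.
  exact: (proj2 (proj2 (span_mod h hT))).
rewrite -(st_idem hst hnz); exact: (st_mono hst (over_nz hT') (st_nz hst hnz) hTs).
Qed.

Lemma partA (K : fieldType) (D : K -> Prop) st T :
  domain_with_qf D -> semistar D st -> PstarMD D st -> is_overring D T ->
  PstarMD T st.
Proof.
move=> hqf hst hP hT' F [[s ->] [x [hx0 hx]]].
have [hT hDT] := hT'; have hD := proj1 hqf.
have hPT : subsetK (prodK (span T s) (colon T (span T s))) T by apply: prod_colon_sub.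
apply: pext.
  move=> y [H [hHfg [hHP hy]]].
  apply: (st_mono hst _ (over_nz hT') _ hy).
    by apply: (nz_sub hDT); exact: fg_nz.
  by move=> z hz; apply: hPT; apply: hHP.
move=> y hy.
have [h [[_ [z [hz0 hz]]] [_ [hhP h1]]]] := core hqf hst hP hT' hx hx0.
have hDh : subsetK (span D h) (span T h) by apply: span_mono.
have hfg : fg_submod T (span T h) by split; [exists h|exists z; split=> //; apply: hDh].
have hnz : nz_submod D (span T h) by apply: (nz_sub hDT); exact: fg_nz.
have h1' : st (span T h) 1.
  apply: (st_mono hst _ hnz hDh h1).
  by apply: (mod_nz (span_mod h hD) hz0 hz).
exists (span T h); split=> //; split=> //.
exact: (st_T_sub hD hst hT' hfg h1' hy).
Qed.

Lemma vopTT (K : fieldType) (T : K -> Prop) : is_subring T -> vop T T = T.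
Proof.
move=> hT; apply: pext => x hx.
  by rewrite -(mulr1 x); apply: hx => b hb; rewrite mul1r.
move=> b hb; apply: srM => //; rewrite -(mulr1 b); apply: hb; exact: sr1.
Qed.

Lemma top_eq (K : fieldType) (T E H0 : K -> Prop) :
  is_subring T -> subsetK E T -> fg_submod T H0 -> subsetK H0 E ->
  vop T H0 1 -> top T E = T.
Proof.
move=> hT hE hH0 hH0E h1; apply: pext.
  move=> x [H [_ [hHE hx]]]; rewrite -(mulr1 x); apply: hx => b hb.
  by rewrite mul1r; apply: hE; apply: hHE.
move=> t ht; exists H0; split=> //; split=> // b hb.
by have := h1 b hb; rewrite mul1r => hb'; apply: srM.
Qed.

Lemma top_T (K : fieldType) (T : K -> Prop) : is_subring T -> top T T = T.
Proof.
move=> hT; apply: (@top_eq _ T T (span T [:: 1])) => //.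
- by split; [exists [:: 1]|exists 1; split; [exact: oner_neq0|apply: mem_span; rewrite ?mem_head]].
- apply: span_sub; first exact: ring_mod.
  by move=> a; rewrite inE => /eqP ->; exact: sr1.
- move=> b hb; rewrite mul1r -(mulr1 b); apply: hb; apply: mem_span => //; exact: mem_head.
Qed.

Lemma st_eqD (K : fieldType) (D : K -> Prop) st h :
  is_subring D -> semistar D st -> fg_submod D (span D h) ->
  subsetK (span D h) D -> st (span D h) 1 -> st (span D h) = st D.
Proof.
move=> hD hst hfg hHD h1.
have hnz := fg_nz hD hfg.
apply: pext; first exact: st_mono hst hnz (D_nz hD) hHD.
have hDs : subsetK D (st (span D h)).
  move=> d hd; rewrite -(mulr1 d); apply: (st_scale_sub0 hst hnz hnz) => // e he.
  exact: (proj2 (proj2 (span_mod h hD))).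
rewrite -(st_idem hst hnz); exact: (st_mono hst (D_nz hD) (st_nz hst hnz) hDs).
Qed.

Lemma tlinked_PvMD (K : fieldType) (D : K -> Prop) st T :
  domain_with_qf D -> semistar D st -> PstarMD D st -> is_overring D T ->
  t_linked D st T -> PvMD T.
Proof.
move=> hqf hst hP hT' hlink F [[s ->] [x [hx0 hx]]].
have [hT hDT] := hT'; have hD := proj1 hqf.
have [h [hfg [hHD [hhP h1]]]] := core hqf hst hP hT' hx hx0.
have heq := st_eqD hD hst hfg hHD h1.
have := hlink _ hfg hHD heq; rewrite top_T // => htop.
have : top T (prodK (span D h) T) 1 by rewrite htop; exact: sr1.
case=> H'' [hH''fg [hH''sub hH''1]].
change (top T (prodK (span T s) (colon T (span T s))) = vop T T).
rewrite vopTT //.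
apply: (top_eq hT _ hH''fg) => //; first exact: prod_colon_sub.
move=> y hy; apply: hhP; apply: (prodK_in_mod (span_mod h hT)) (hH''sub y hy).
move=> a b ha hb; rewrite mulrC; apply: (proj2 (proj2 (span_mod h hT))) => //.
by apply: (span_mono hT hDT).
Qed.

Lemma tlink_gen (K : fieldType) (D : K -> Prop) st T :
  is_subring D -> is_overring D T ->
  (forall s, fg_submod D (span D s) -> subsetK (span D s) D ->
     st (span D s) = st D -> forall b, (forall a, a \in s -> T (b * a)) -> T b) ->
  t_linked D st T.
Proof.
move=> hD [hT hDT] hyp F [[s ->] [z [hz0 hz]]] hFD heq.
have hfg : fg_submod D (span D s) by split; [exists s|exists z].
have hTT : subsetK T T by [].
rewrite top_T //; apply: (@top_eq _ T _ (span T s)) => //.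
- apply: (prodK_in_mod (ring_mod hT hTT)) => a b ha hb.
  by apply: srM => //; apply: hDT; apply: hFD.
- by split; [exists s|exists z; split=> //; exact: (span_mono hT hDT)].
- apply: span_sub.
    by apply: prodK_mod => r b hr hb; exact: srM.
  move=> a ha; rewrite -(mulr1 a); apply: prodK1; [exact: mem_span|exact: sr1].
- move=> b hb; rewrite mul1r; apply: (hyp s) => // a ha.
  by apply: hb; exact: mem_span.
Qed.

Lemma stD_mul (K : fieldType) (D : K -> Prop) st x y :
  is_subring D -> semistar D st -> st D x -> st D y -> st D (x * y).
Proof.
move=> hD hst hx hy.
rewrite -(st_idem hst (D_nz hD)).
apply: (st_scale_sub0 hst (D_nz hD) (st_nz hst (D_nz hD))) hy => e he.
rewrite mulrC; apply: (proj2 (proj2 (nz_mod (st_nz hst (D_nz hD))))) => //.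
Qed.

Lemma stD_over (K : fieldType) (D : K -> Prop) st :
  is_subring D -> semistar D st -> is_overring D (st D).
Proof.
move=> hD hst.
have hm := nz_mod (st_nz hst (D_nz hD)).
have hext := st_ext hst (D_nz hD).
split; last exact: hext.
split; first by apply: hext; exact: sr1.
split; last by move=> x y; exact: stD_mul.
move=> x y hx hy; apply: (proj1 (proj2 hm)) => //; exact: (modN hD hm).
Qed.

Lemma span1_sub (K : fieldType) (D : K -> Prop) :
  is_subring D -> subsetK (span D [:: 1]) D.
Proof.
move=> hD; apply: span_sub; first exact: ring_mod.
by move=> a; rewrite inE => /eqP ->; exact: sr1.
Qed.

Lemma span1_fg (K : fieldType) (D : K -> Prop) :
  is_subring D -> fg_submod D (span D [:: 1]).
Proof.
move=> hD; split; first by exists [:: 1].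
by exists 1; split; [exact: oner_neq0|apply: mem_span => //; exact: mem_head].
Qed.

Lemma Dbrack_eq (K : fieldType) (D : K -> Prop) st :
  is_subring D -> semistar D st -> PstarMD D st -> Dbrack D st = st D.
Proof.
move=> hD hst hP.
have hDnz := D_nz hD; have hsDnz := st_nz hst hDnz.
have hm := nz_mod hsDnz.
apply: pext.
  move=> x [H [hHfg hx]].
  have hHnz := fg_nz hD hHfg.
  have h1 : st D 1 by apply: (st_ext hst hDnz); exact: sr1.
  rewrite -(hP _ hHfg) in h1.
  case: h1 => H0 [hH0fg [hH0P h1]].
  rewrite -(mulr1 x) -(st_idem hst hDnz).
  apply: (st_scale_sub0 hst (fg_nz hD hH0fg) hsDnz) h1 => e he.
  have := hH0P e he; apply: (@prodK_ind _ _ _ (fun y => st D (x * y))).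
  - by rewrite mulr0; exact: (proj1 hm).
  - by move=> u v hu hv; rewrite mulrDr; apply: (proj1 (proj2 hm)).
  - move=> a b ha hb; rewrite (mulrC a b) mulrCA.
    have hxa : st H (x * a) by apply: hx; exact: (st_ext hst hHnz).
    rewrite -(st_idem hst hDnz).
    apply: (st_scale_sub0 hst hHnz hsDnz) hxa => e' he'.
    by apply: (st_ext hst hDnz); apply: hb.
move=> x hx; exists (span D [:: 1]); split; first exact: span1_fg.
rewrite (st_eqD hD hst (span1_fg hD) (span1_sub hD)).
  by move=> b hb; exact: stD_mul.
by apply: (st_ext hst (fg_nz hD (span1_fg hD))); apply: mem_span => //; exact: mem_head.
Qed.

Lemma stD_tlinked (K : fieldType) (D : K -> Prop) st :
  is_subring D -> semistar D st -> t_linked D st (st D).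
Proof.
move=> hD hst.
have hDnz := D_nz hD; have hsDnz := st_nz hst hDnz.
have hm := nz_mod hsDnz.
apply: tlink_gen => //; first exact: stD_over.
move=> s hfg hFD heq b hb.
have h1 : st (span D s) 1 by rewrite heq; apply: (st_ext hst hDnz); exact: sr1.
rewrite -(st_idem hst hDnz) -(mulr1 b).
apply: (st_scale_sub0 hst (fg_nz hD hfg) hsDnz) h1.
apply: span_sub => //.
case: hm => h0 [hDD hM]; split; first by rewrite mulr0.
split; first by move=> u v hu hv; rewrite mulrDr; exact: hDD.
by move=> r u hr hu; rewrite mulrCA; exact: hM.
Qed.

Lemma cc_sub (K : fieldType) (D E : K -> Prop) x y :
  is_subring D -> ismod D E -> colon E E x -> colon E E y -> colon E E (x - y).
Proof.
move=> hD hE hx hy b hb; rewrite mulrBl; apply: (proj1 (proj2 hE)); first exact: hx.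
by apply: (modN hD hE); apply: hy.
Qed.

Lemma cc_mul (K : fieldType) (E : K -> Prop) x y :
  colon E E x -> colon E E y -> colon E E (x * y).
Proof. by move=> hx hy b hb; rewrite -mulrA; apply: hx; apply: hy. Qed.

Lemma cc_left (K : fieldType) (E E' : K -> Prop) x :
  colon E E x -> colon (prodK E E') (prodK E E') x.
Proof.
move=> hx z; apply: (@prodK_ind _ _ _ (fun y => prodK E E' (x * y))).
- by rewrite mulr0; exact: prodK0.
- by move=> u v hu hv; rewrite mulrDr; exact: prodKD.
- by move=> a b ha hb; rewrite mulrA; apply: prodK1 => //; apply: hx.
Qed.

Lemma cc_right (K : fieldType) (E E' : K -> Prop) x :
  colon E' E' x -> colon (prodK E E') (prodK E E') x.
Proof.
move=> hx z; apply: (@prodK_ind _ _ _ (fun y => prodK E E' (x * y))).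
- by rewrite mulr0; exact: prodK0.
- by move=> u v hu hv; rewrite mulrDr; exact: prodKD.
- by move=> a b ha hb; rewrite mulrCA; apply: prodK1 => //; apply: hx.
Qed.

Lemma prod_frac (K : fieldType) (D E E' : K -> Prop) :
  is_subring D -> frac_ideal D E -> frac_ideal D E' -> frac_ideal D (prodK E E').
Proof.
move=> hD [hE [d [hd0 [hd hdE]]]] [hE' [d' [hd0' [hd' hdE']]]].
split.
  have [e [he0 he]] := proj2 (proj2 (proj2 hE)).
  have [e' [he0' he']] := proj2 (proj2 (proj2 hE')).
  apply: (@mod_nz _ _ _ (e * e')); last exact: prodK1.
    by apply: prodK_mod => r b hr hb; apply: (proj2 (proj2 (nz_mod hE'))).
  by rewrite mulf_neq0.
exists (d * d'); split; first by rewrite mulf_neq0.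
split; first exact: srM.
move=> y [z [hz ->]]; move: z hz.
apply: (@prodK_ind _ _ _ (fun z => D (d * d' * z))).
- by rewrite mulr0; exact: sr0.
- by move=> u v hu hv; rewrite mulrDr; exact: srD.
- move=> a b ha hb; rewrite mulrACA; apply: srM => //.
  + by apply: hdE; exists a.
  + by apply: hdE'; exists b.
Qed.

Lemma frac_D (K : fieldType) (D : K -> Prop) : is_subring D -> frac_ideal D D.
Proof.
move=> hD; split; first exact: D_nz.
exists 1; split; first exact: oner_neq0.
by split; [exact: sr1|move=> y [e [he ->]]; rewrite mul1r].
Qed.

Lemma cic_over (K : fieldType) (D : K -> Prop) :
  is_subring D -> is_overring D (cic D).
Proof.
move=> hD; split; last first.
  by move=> d hd; exists D; split; [exact: frac_D|move=> b hb; exact: srM].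
split; first by exists D; split; [exact: frac_D|move=> b hb; rewrite mul1r].
split.
  move=> x y [E [hE hx]] [E' [hE' hy]]; exists (prodK E E').
  split; first exact: prod_frac.
  apply: (cc_sub hD (nz_mod (proj1 (prod_frac hD hE hE')))).
    exact: cc_left. exact: cc_right.
move=> x y [E [hE hx]] [E' [hE' hy]]; exists (prodK E E').
split; first exact: prod_frac.
by apply: cc_mul; [exact: cc_left|exact: cc_right].
Qed.

Lemma cic_list (K : fieldType) (D : K -> Prop) (l : seq K) :
  is_subring D -> (forall a, a \in l -> cic D a) ->
  exists E, frac_ideal D E /\ forall a, a \in l -> colon E E a.
Proof.
move=> hD; elim: l => [|a l IH] hl.
  by exists D; split; [exact: frac_D|].
have [E [hE hEl]] : exists E, frac_ideal D E /\ forall a, a \in l -> colon E E a.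
  by apply: IH => b hb; apply: hl; rewrite in_cons hb orbT.
have [E' [hE' ha]] := hl a (mem_head _ _).
exists (prodK E E'); split; first exact: prod_frac.
move=> b; rewrite in_cons => /orP [/eqP ->|hb]; first exact: cc_right.
by apply: cc_left; apply: hEl.
Qed.

Lemma cic_tlinked (K : fieldType) (D : K -> Prop) st :
  is_subring D -> semistar D st -> (exists x, x != 0 /\ colon D (st D) x) ->
  t_linked D st (cic D).
Proof.
move=> hD hst [c [hc0 hc]].
have hDnz := D_nz hD; have hsDnz := st_nz hst hDnz.
have hcic := cic_over hD.
apply: tlink_gen => // s hfg hFD heq b hb.
case: (eqVneq b 0) => [->|hb0]; first exact: (sr0 (proj1 hcic)).
have [E [hE hEl]] : exists E, frac_ideal D E /\ forall a, a \in [seq b * a | a <- s] -> colon E E a.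
  apply: cic_list => // y /mapP [a ha ->]; exact: hb.
have [hEnz [d [hd0 [hd hdE]]]] := hE.
have hEm := nz_mod hEnz.
have hFnz := fg_nz hD hfg.
have c1 : forall f, span D s f -> colon E E (b * f).
  apply: span_sub; last by move=> a ha; apply: hEl; exact: map_f.
  split; first by rewrite mulr0 => e he; rewrite mul0r; exact: (proj1 hEm).
  split; first by move=> u v hu hv; rewrite mulrDr => e he; rewrite mulrDl;
    apply: (proj1 (proj2 hEm)); [apply: hu|apply: hv].
  move=> r u hr hu e he; rewrite mulrCA -mulrA; apply: (proj2 (proj2 hEm)) => //.
  exact: hu.
have c2 : forall z, prodK (span D s) E z -> E (b * z).
  apply: (@prodK_ind _ _ _ (fun z => E (b * z))).
  - by rewrite mulr0; exact: (proj1 hEm).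
  - by move=> u v hu hv; rewrite mulrDr; exact: (proj1 (proj2 hEm)).
  - by move=> f e hf he; rewrite mulrA; apply: c1.
have hPm : ismod D (prodK (span D s) E).
  by apply: prodK_mod => r e hr he; exact: (proj2 (proj2 hEm)).
have hPnz : nz_submod D (prodK (span D s) E).
  have [f [hf0 hf]] := proj2 (proj2 (proj2 hFnz)).
  have [e [he0 he]] := proj2 (proj2 (proj2 hEnz)).
  by apply: (mod_nz hPm (x := f * e)); [rewrite mulf_neq0|exact: prodK1].
have h1 : st (span D s) 1 by rewrite heq; apply: (st_ext hst hDnz); exact: sr1.
have c3 : subsetK E (st (prodK (span D s) E)).
  move=> e he; rewrite -(mulr1 e); apply: (st_scale_sub0 hst hFnz hPnz) h1 => f hf.
  by rewrite mulrC; exact: prodK1.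
have c3' : subsetK (st E) (st (prodK (span D s) E)).
  rewrite -(st_idem hst hPnz); exact: (st_mono hst hEnz (st_nz hst hPnz) c3).
exists (st E); split; last first.
  move=> y hy; apply: (st_scale_sub0 hst hPnz hEnz) (c3' y hy) => z hz; exact: c2.
split; first exact: st_nz.
have hcD : D c by rewrite -(mulr1 c); apply: hc; apply: (st_ext hst hDnz); exact: sr1.
exists (c * d); split; first by rewrite mulf_neq0.
split; first exact: srM.
move=> y [e' [he' ->]]; rewrite -mulrA; apply: hc.
apply: (st_scale_sub0 hst hEnz hDnz) he' => e he; apply: hdE; by exists e.
Qed.

Theorem corollary5p5 (K : fieldType) (D : K -> Prop)
  (st : (K -> Prop) -> (K -> Prop)) :
  domain_with_qf D -> semistar D st -> PstarMD D st ->
  (forall T, is_overring D T -> PstarMD T st) /\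
  ((forall T, is_overring D T -> t_linked D st T -> PvMD T) /\
   PvMD (Dbrack D st) /\
   ((exists x, x != 0 /\ colon D (st D) x) -> PvMD (cic D))).
Proof.
move=> hqf hst hP; have hD := proj1 hqf.
split; first by move=> T hT; exact: (partA hqf hst hP hT).
split; first by move=> T hT hl; exact: (tlinked_PvMD hqf hst hP hT hl).
split.
  rewrite Dbrack_eq //; exact: (tlinked_PvMD hqf hst hP (stD_over hD hst) (stD_tlinked hD hst)).
move=> hc; exact: (tlinked_PvMD hqf hst hP (cic_over hD) (cic_tlinked hD hst hc)).
Qed.
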